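(* Let $G=\{(x,R(x)) : x\in[0,1]\}$ be the graph of $R$. Then its closure in $\mathbb R^2$ is $$\overline{G}=G\cup\bigcup_{x\in\mathscr D\setminus\{1\}}\big(\{x\}\times I_x\big).$$ Moreover, for every $x\in\mathscr D\setminus\{0,1\}$, $$I_x=\Big[\liminf_{t\searrow x}R(t),\ \limsup_{t\searrow x}R(t)\Big]\quad\text{and}\quad R(x)\notin I_x.$$
   Context: Define $\rho$ on binary words: for $b=b_1b_2\dots$, $\rho(b)$ is obtained by deleting every digit $b_n=0$ and replacing every $b_n=1$ by $0$ if $n$ is odd and by $1$ if $n$ is even. For $x\in(0,1]$ let $\beta(x)$ be the unique binary expansion of $x$ with infinitely many $1$'s. Define $R:[0,1]\to[0,1]$ by $R(0)=2/3$ and, for $x\in(0,1]$, $R(x)=\sum_{n\ge1}c_n2^{-n}$ where $c=\rho(\beta(x))$. $\mathscr D$ is the set of dyadic rationals in $[0,1]$. For $x\in\mathscr D\setminus\{1\}$ with finite binary expression $x=0.x_1x_2\dots x_n$ (terminal zeros irrelevant; empty word for $x=0$), let $u=\rho(x_1\dots x_n)$ (a finite word) and let $I_x$ be the closed interval of all $y\in[0,1]$ having a binary expansion beginning with $u$, i.e. $I_x=[0.u000\dots,\,0.u111\dots]$; in particular $I_0=[0,1]$. *)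

(* Defs.v *)
From Stdlib Require Import Reals List ClassicalEpsilon.
From Coquelicot Require Import Coquelicot.
Open Scope R_scope.

(* Binary words.  An infinite word b_1 b_2 ... is a stream [b : nat -> bool]
   with [b i] = digit b_(i+1) (0-based storage, 1-based positions as in the paper).
   A finite word is a [list bool]. *)

Definition bit (c : bool) : R := if c then 1 else 0.

Definition stream_val (b : nat -> bool) : R :=
  Series (fun i => bit (b i) / 2 ^ (S i)).

Fixpoint list_val (w : list bool) : R :=
  match w with
  | nil => 0
  | c :: w' => (bit c + list_val w') / 2
  end.

(* rho on finite words.  [rho_from i w]: w starts at 0-based index i, i.e. at
   position n = i+1.  A digit 0 is deleted; a digit 1 at position n is replaced
   by 0 if n is odd (i even) and by 1 if n is even (i odd). *)
Fixpoint rho_from (i : nat) (w : list bool) : list bool :=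
  match w with
  | nil => nil
  | false :: w' => rho_from (S i) w'
  | true :: w' => Nat.odd i :: rho_from (S i) w'
  end.

Definition rho (w : list bool) : list bool := rho_from 0 w.

Definition prefix (b : nat -> bool) (m : nat) : list bool := map b (seq 0 m).

Definition is_prefix_of (w : list bool) (c : nat -> bool) : Prop :=
  forall i, (i < length w)%nat -> c i = nth i w false.

Definition inh_stream : inhabited (nat -> bool) := inhabits (fun _ => true).

(* rho on infinite words (with infinitely many 1's): the infinite word whose
   prefixes are the images under rho of the prefixes of b (rho acts letter by
   letter, so this is exactly the deletion/replacement description). *)
Definition rho_stream (b : nat -> bool) : nat -> bool :=
  epsilon inh_stream (fun c => forall m, is_prefix_of (rho (prefix b m)) c).

Definition infinitely_many_ones (b : nat -> bool) : Prop :=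
  forall N, exists n, (N <= n)%nat /\ b n = true.

Definition is_beta (x : R) (b : nat -> bool) : Prop :=
  infinitely_many_ones b /\ stream_val b = x.

Definition beta (x : R) : nat -> bool := epsilon inh_stream (is_beta x).

(* The map R : [0,1] -> [0,1] (values outside [0,1] are irrelevant). *)
Definition Rmap (x : R) : R :=
  match Rle_dec x 0 with
  | left _ => 2 / 3
  | right _ => stream_val (rho_stream (beta x))
  end.

(* I_x for the dyadic x = 0.w (w a finite binary expression of x):
   u = rho(w), I_x = [0.u000..., 0.u111...] = [0.u, 0.u + 2^(-|u|)]. *)
Definition Ix (w : list bool) (y : R) : Prop :=
  list_val (rho w) <= y <= list_val (rho w) + / 2 ^ length (rho w).

Definition in_closure_graph (f : R -> R) (a b : R) : Prop :=
  forall eps, 0 < eps ->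
    exists t, 0 <= t <= 1 /\ sqrt ((t - a) ^ 2 + (f t - b) ^ 2) < eps.

Definition liminf_right (f : R -> R) (x : R) : Rbar :=
  Lub_Rbar (fun s => exists d, 0 < d /\
    Finite s = Glb_Rbar (fun y => exists t, x < t < x + d /\ y = f t)).

Definition limsup_right (f : R -> R) (x : R) : Rbar :=
  Glb_Rbar (fun s => exists d, 0 < d /\
    Finite s = Lub_Rbar (fun y => exists t, x < t < x + d /\ y = f t)).

(* Main.v *)
Require Import Defs.
From Stdlib Require Import Reals List Lra Lia Classical ClassicalEpsilon FunctionalExtensionality.
From Coquelicot Require Import Coquelicot.
Open Scope R_scope.

Definition geo (i : nat) : R := / 2 ^ (S i).

Lemma geo_series : is_series geo 1.
Proof.
  assert (H := is_series_geom (/2)).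
  assert (Ha : Rabs (/2) < 1) by (rewrite Rabs_pos_eq; lra).
  specialize (H Ha).
  replace 1 with (/ (1 - /2) * /2) by field.
  apply (is_series_ext (fun n => (/2)^n * /2)).
  - intros n. unfold geo. simpl. rewrite pow_inv. field. apply pow_nonzero; lra.
  - apply (is_series_scal_r (/2)) in H. exact H.
Qed.

Lemma bit_bounds c : 0 <= bit c <= 1.
Proof. destruct c; simpl; lra. Qed.

Lemma term_bounds (b : nat -> bool) n : 0 <= bit (b n) / 2 ^ S n <= geo n.
Proof.
  unfold geo. assert (0 < / 2 ^ S n) by (apply Rinv_0_lt_compat, pow_lt; lra).
  destruct (bit_bounds (b n)). unfold Rdiv. split; nra.
Qed.

Lemma sv_ex b : ex_series (fun i => bit (b i) / 2 ^ (S i)).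
Proof.
  apply (@ex_series_le R_AbsRing R_CompleteNormedModule _ geo).
  - intros n. destruct (term_bounds b n). rewrite Rabs_pos_eq; auto.
  - exists 1. apply geo_series.
Qed.

Lemma sv_bounds b : 0 <= stream_val b <= 1.
Proof.
  unfold stream_val. split.
  - replace 0 with (Series (fun n => 0 * geo n)).
    + apply Series_le. intros n. destruct (term_bounds b n). lra.
      exact (sv_ex b).
    + rewrite Series_scal_l. ring.
  - rewrite <- (is_series_unique _ _ geo_series). apply Series_le.
    apply term_bounds. exists 1; apply geo_series.
Qed.

Definition shift (b : nat -> bool) : nat -> bool := fun i => b (S i).

Lemma sv_step b : stream_val b = (bit (b 0%nat) + stream_val (shift b)) / 2.
Proof.
  unfold stream_val. rewrite Series_incr_1 by apply sv_ex.
  rewrite (Series_ext _ (fun i => (bit (shift b i) / 2 ^ S i) * /2)).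
  - rewrite Series_scal_r. simpl. field.
  - intros n. unfold shift. simpl. field. apply pow_nonzero; lra.
Qed.

Lemma sv_ones : stream_val (fun _ => true) = 1.
Proof.
  unfold stream_val. rewrite <- (is_series_unique _ _ geo_series).
  apply Series_ext. intros n. unfold geo. simpl. field. apply pow_nonzero; lra.
Qed.

Definition shiftn (m : nat) (b : nat -> bool) : nat -> bool := fun i => b (m + i)%nat.

Lemma sv_ext b c : (forall i, b i = c i) -> stream_val b = stream_val c.
Proof. intros H. unfold stream_val. apply Series_ext. intros n; rewrite H; auto. Qed.

Lemma prefix_S b m : prefix b (S m) = b 0%nat :: prefix (shift b) m.
Proof.
  unfold prefix. simpl. f_equal. rewrite <- seq_shift, map_map. reflexivity.
Qed.

Lemma prefix_length b m : length (prefix b m) = m.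
Proof. unfold prefix. rewrite length_map, length_seq. auto. Qed.

Lemma rpow2_pos n : 0 < 2 ^ n.
Proof. apply pow_lt; lra. Qed.

Lemma sv_split b m : stream_val b = list_val (prefix b m) + stream_val (shiftn m b) / 2 ^ m.
Proof.
  revert b; induction m; intros b.
  - simpl. rewrite (sv_ext (shiftn 0 b) b) by reflexivity. field.
  - rewrite prefix_S, sv_step, IHm. simpl.
    rewrite (sv_ext (shiftn m (shift b)) (shiftn (S m) b)) by reflexivity.
    field. apply pow_nonzero; lra.
Qed.

Lemma list_val_app u v : list_val (u ++ v) = list_val u + list_val v / 2 ^ length u.
Proof.
  induction u; simpl.
  - field.
  - rewrite IHu. field. apply pow_nonzero; lra.
Qed.

Lemma list_val_bounds w : 0 <= list_val w <= 1 - / 2 ^ length w.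
Proof.
  induction w; simpl.
  - lra.
  - destruct (bit_bounds a). assert (Hp2 := rpow2_pos (length w)).
    rewrite Rinv_mult. split. lra.
    assert (0 < / 2 ^ length w) by (apply Rinv_0_lt_compat; auto).
    destruct a; simpl in *; lra.
Qed.

Lemma prefix_app b m k : prefix b (m + k) = prefix b m ++ map b (seq m k).
Proof. unfold prefix. rewrite seq_app, map_app. reflexivity. Qed.

Lemma is_prefix_eq u c : is_prefix_of u c -> prefix c (length u) = u.
Proof.
  intros H. apply nth_ext with (d := false) (d' := false).
  - apply prefix_length.
  - intros n Hn. rewrite prefix_length in Hn. rewrite <- H by auto.
    unfold prefix. rewrite nth_indep with (d' := c 0%nat) by (rewrite length_map, length_seq; auto).
    rewrite map_nth, seq_nth by auto. reflexivity.
Qed.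

Lemma cyl u c : is_prefix_of u c ->
  list_val u <= stream_val c <= list_val u + / 2 ^ length u.
Proof.
  intros H. rewrite (sv_split c (length u)), is_prefix_eq by auto.
  destruct (sv_bounds (shiftn (length u) c)) as [H0 H1]. assert (H2 := rpow2_pos (length u)).
  unfold Rdiv. split.
  - assert (0 <= stream_val (shiftn (length u) c) * / 2 ^ length u).
    { apply Rmult_le_pos; auto. left; apply Rinv_0_lt_compat; auto. }
    lra.
  - apply Rplus_le_compat_l. rewrite <- (Rmult_1_l (/ 2 ^ length u)) at 2.
    apply Rmult_le_compat_r; auto. left; apply Rinv_0_lt_compat; auto.
Qed.

Lemma inf_shiftn b m : infinitely_many_ones b -> infinitely_many_ones (shiftn m b).
Proof.
  intros H N. destruct (H (m + N)%nat) as [n [Hn Hb]].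
  exists (n - m)%nat. split. lia. unfold shiftn. replace (m + (n - m))%nat with n by lia. auto.
Qed.

Lemma sv_pos b : infinitely_many_ones b -> 0 < stream_val b.
Proof.
  intros H. destruct (H 0%nat) as [n [_ Hn]].
  rewrite (sv_split b n), sv_step.
  unfold shiftn at 1. rewrite Nat.add_0_r, Hn. simpl.
  destruct (list_val_bounds (prefix b n)).
  destruct (sv_bounds (shift (shiftn n b))). assert (Hq := rpow2_pos n).
  assert (0 < (1 + stream_val (shift (shiftn n b))) / 2 / 2 ^ n).
  { apply Rdiv_lt_0_compat; auto. lra. }
  lra.
Qed.

Lemma prefix_interval b m : infinitely_many_ones b ->
  list_val (prefix b m) < stream_val b <= list_val (prefix b m) + / 2 ^ m.
Proof.
  intros H. rewrite (sv_split b m).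
  assert (Hp := sv_pos _ (inf_shiftn b m H)).
  destruct (sv_bounds (shiftn m b)) as [Hb0 Hb1]. assert (H2 := rpow2_pos m).
  split.
  - assert (0 < stream_val (shiftn m b) / 2 ^ m) by (apply Rdiv_lt_0_compat; auto). lra.
  - apply Rplus_le_compat_l. unfold Rdiv. rewrite <- (Rmult_1_l (/ 2 ^ m)) at 2.
    apply Rmult_le_compat_r; auto. left; apply Rinv_0_lt_compat; auto.
Qed.

Lemma inv_pow_S n : / 2 ^ S n = / 2 ^ n / 2.
Proof. simpl. rewrite Rinv_mult. unfold Rdiv. ring. Qed.

Lemma word_unique p q t : length p = length q ->
  list_val p < t <= list_val p + / 2 ^ length p ->
  list_val q < t <= list_val q + / 2 ^ length q -> p = q.
Proof.
  revert q t; induction p as [|a p IH]; intros q t Hl Hp Hq.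
  - destruct q; simpl in *; auto; discriminate.
  - destruct q as [|a' q]; simpl in Hl; try discriminate. injection Hl as Hl.
    simpl list_val in *. simpl length in *. rewrite inv_pow_S in *.
    rewrite Hl in Hp. 
    assert (Hb1 := list_val_bounds p). assert (Hb2 := list_val_bounds q).
    rewrite Hl in Hb1.
    assert (HE : 0 < / 2 ^ length q) by (apply Rinv_0_lt_compat, rpow2_pos).
    destruct a, a'; simpl bit in *.
    + f_equal. apply (IH q (2 * t - 1)); auto; try rewrite Hl; lra.
    + exfalso. lra.
    + exfalso. lra.
    + f_equal. apply (IH q (2 * t)); auto; try rewrite Hl; lra.
Qed.

Lemma same_prefix b p : infinitely_many_ones b ->
  list_val p < stream_val b <= list_val p + / 2 ^ length p ->
  prefix b (length p) = p.
Proof.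
  intros Hb Hp. apply (word_unique _ _ (stream_val b)).
  - apply prefix_length.
  - rewrite prefix_length. apply prefix_interval; auto.
  - auto.
Qed.

Lemma small_pow e : 0 < e -> exists N, / 2 ^ N < e.
Proof.
  intros He. assert (Ha : Rabs (/2) < 1) by (rewrite Rabs_pos_eq; lra).
  destruct (pow_lt_1_zero _ Ha e He) as [N HN]. exists N.
  specialize (HN N (le_n N)). rewrite pow_inv, Rabs_pos_eq in HN; auto.
  left; apply Rinv_0_lt_compat, rpow2_pos.
Qed.

Lemma inv_pow_le m n : (m <= n)%nat -> / 2 ^ n <= / 2 ^ m.
Proof.
  intros H. apply Rinv_le_contravar. apply rpow2_pos. apply Rle_pow; auto; lra.
Qed.

Lemma eq_of_close a b : (forall m, Rabs (a - b) <= / 2 ^ m) -> a = b.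
Proof.
  intros H. destruct (Req_dec (a - b) 0). lra. exfalso.
  assert (Hp : 0 < Rabs (a - b)) by (apply Rabs_pos_lt; auto).
  destruct (small_pow _ Hp) as [N HN]. specialize (H N). lra.
Qed.

Definition nxt (y : R) : R := if Rle_dec y (1/2) then 2 * y else 2 * y - 1.
Fixpoint ys (x : R) (n : nat) : R := match n with O => x | S n => nxt (ys x n) end.
Definition bstr (x : R) (n : nat) : bool := if Rle_dec (ys x n) (1/2) then false else true.

Lemma nxt_range y : 0 < y <= 1 -> 0 < nxt y <= 1.
Proof. unfold nxt; destruct (Rle_dec y (1/2)); lra. Qed.

Lemma ys_range x n : 0 < x <= 1 -> 0 < ys x n <= 1.
Proof. intros H; induction n; simpl; auto. apply nxt_range; auto. Qed.

Lemma ys_S x n : ys x (S n) = ys (nxt x) n.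
Proof. induction n; simpl; auto. simpl in IHn. rewrite IHn. auto. Qed.

Lemma bstr_S x n : bstr x (S n) = bstr (nxt x) n.
Proof. unfold bstr. rewrite ys_S. auto. Qed.

Lemma nxt_eq x : x = (bit (bstr x 0) + nxt x) / 2.
Proof. unfold bstr, nxt; simpl; destruct (Rle_dec x (1/2)); simpl; lra. Qed.

Lemma bstr_val_prefix m x :
  x = list_val (prefix (bstr x) m) + ys x m / 2 ^ m.
Proof.
  revert x; induction m; intros x.
  - simpl. lra.
  - rewrite prefix_S. 
    replace (prefix (shift (bstr x)) m) with (prefix (bstr (nxt x)) m).
    2:{ unfold prefix. apply map_ext. intros; unfold shift; rewrite bstr_S; auto. }
    rewrite ys_S. simpl list_val.
    rewrite (nxt_eq x) at 1. rewrite (IHm (nxt x)) at 1.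
    simpl. field. apply pow_nonzero; lra.
Qed.

Lemma bstr_val x : 0 < x <= 1 -> stream_val (bstr x) = x.
Proof.
  intros Hx. apply eq_of_close. intros m.
  rewrite (sv_split _ m). pose proof (bstr_val_prefix m x) as E.
  destruct (sv_bounds (shiftn m (bstr x))) as [Hs1 Hs2]. destruct (ys_range x m Hx) as [Hy1 Hy2].
  assert (H2 := rpow2_pos m).
  assert (HI : 0 < / 2 ^ m) by (apply Rinv_0_lt_compat; auto).
  assert (0 <= stream_val (shiftn m (bstr x)) / 2 ^ m <= / 2 ^ m).
  { unfold Rdiv. split. apply Rmult_le_pos; lra. rewrite <- (Rmult_1_l (/ 2 ^ m)) at 2.
    apply Rmult_le_compat_r; lra. }
  assert (0 <= ys x m / 2 ^ m <= / 2 ^ m).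
  { unfold Rdiv. split. apply Rmult_le_pos; lra. rewrite <- (Rmult_1_l (/ 2 ^ m)) at 2.
    apply Rmult_le_compat_r; lra. }
  apply Rabs_le. lra.
Qed.

Lemma ys_zeros x N j : (forall n, (N <= n)%nat -> bstr x n = false) ->
  ys x (N + j) = 2 ^ j * ys x N.
Proof.
  intros H. induction j.
  - rewrite Nat.add_0_r. simpl. ring.
  - rewrite Nat.add_succ_r. simpl. rewrite Rmult_assoc, <- IHj. unfold nxt.
    specialize (H (N + j)%nat ltac:(lia)). unfold bstr in H.
    destruct (Rle_dec (ys x (N + j)) (1/2)); try discriminate. ring.
Qed.

Lemma bstr_inf x : 0 < x <= 1 -> infinitely_many_ones (bstr x).
Proof.
  intros Hx N. apply NNPP. intros Hc.
  assert (Hz : forall n, (N <= n)%nat -> bstr x n = false).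
  { intros n Hn. destruct (bstr x n) eqn:E; auto. exfalso; apply Hc; eauto. }
  destruct (ys_range x N Hx) as [Hy1 Hy2].
  destruct (small_pow _ Hy1) as [j Hj].
  assert (Hr := ys_range x (N + j) Hx). rewrite (ys_zeros x N j Hz) in Hr.
  assert (H2 := rpow2_pos j).
  apply (Rmult_lt_compat_l (2 ^ j)) in Hj; auto.
  rewrite Rinv_r in Hj by lra. lra.
Qed.

Lemma beta_spec x : 0 < x <= 1 -> is_beta x (beta x).
Proof.
  intros Hx. unfold beta. apply epsilon_spec. exists (bstr x).
  split. apply bstr_inf; auto. apply bstr_val; auto.
Qed.

Lemma rho_from_app i u v : rho_from i (u ++ v) = rho_from i u ++ rho_from (i + length u) v.
Proof.
  revert i; induction u as [|a u IH]; intros i; simpl.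
  - rewrite Nat.add_0_r; auto.
  - rewrite Nat.add_succ_r. destruct a; simpl; rewrite IH; auto.
Qed.

Lemma rho_mono b m m' : (m <= m')%nat -> exists s, rho (prefix b m') = rho (prefix b m) ++ s.
Proof.
  intros H. replace m' with (m + (m' - m))%nat by lia. rewrite prefix_app.
  unfold rho. rewrite rho_from_app. eauto.
Qed.

Lemma rho_len_unbounded b : infinitely_many_ones b ->
  forall j, exists m, (j < length (rho (prefix b m)))%nat.
Proof.
  intros Hb j. induction j.
  - destruct (Hb 0%nat) as [n [_ Hn]]. exists (S n).
    replace (S n) with (n + 1)%nat by lia. rewrite prefix_app. unfold rho.
    rewrite rho_from_app. simpl. rewrite Hn. simpl. rewrite length_app. simpl. lia.
  - destruct IHj as [m Hm]. destruct (Hb m) as [n [Hn Hbn]].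
    exists (S n). destruct (rho_mono b m n Hn) as [s Hs].
    replace (S n) with (n + 1)%nat by lia. rewrite prefix_app. unfold rho.
    rewrite rho_from_app. simpl. rewrite Hbn. unfold rho in Hs. rewrite Hs.
    rewrite !length_app. simpl. unfold rho in Hm. lia.
Qed.

Lemma rho_stream_spec b : infinitely_many_ones b ->
  forall m, is_prefix_of (rho (prefix b m)) (rho_stream b).
Proof.
  intros Hb. unfold rho_stream. apply epsilon_spec.
  assert (HM : forall j, {m | (j < length (rho (prefix b m)))%nat}).
  { intros j. apply constructive_indefinite_description. apply rho_len_unbounded; auto. }
  exists (fun j => nth j (rho (prefix b (proj1_sig (HM j)))) false).
  intros m i Hi. destruct (HM i) as [m1 Hm1]. simpl.
  destruct (Nat.le_ge_cases m m1) as [Hle|Hle].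
  - destruct (rho_mono b m m1 Hle) as [s Hs]. rewrite Hs. rewrite app_nth1; auto.
  - destruct (rho_mono b m1 m Hle) as [s Hs]. rewrite Hs. rewrite app_nth1; auto.
Qed.

Lemma Rmap_bounds x : 0 <= Rmap x <= 1.
Proof. unfold Rmap. destruct (Rle_dec x 0). lra. apply sv_bounds. Qed.

Lemma Rmap_cyl x m : 0 < x <= 1 ->
  list_val (rho (prefix (beta x) m)) <= Rmap x <=
  list_val (rho (prefix (beta x) m)) + / 2 ^ length (rho (prefix (beta x) m)).
Proof.
  intros Hx. unfold Rmap. destruct (Rle_dec x 0). lra.
  destruct (beta_spec x Hx) as [Hi Hv].
  apply cyl. apply rho_stream_spec; auto.
Qed.

Lemma nbhd p t : list_val p < t <= list_val p + / 2 ^ length p ->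
  list_val (rho p) <= Rmap t <= list_val (rho p) + / 2 ^ length (rho p).
Proof.
  intros Ht. assert (Hb := list_val_bounds p).
  assert (Hx : 0 < t <= 1) by lra.
  destruct (beta_spec t Hx) as [Hi Hv].
  rewrite <- (same_prefix (beta t) p); auto. apply Rmap_cyl; auto. rewrite Hv; auto.
Qed.

Lemma realize v : forall i, exists z, rho_from i z = v.
Proof.
  induction v as [|d v IH]; intros i.
  - exists nil; auto.
  - destruct (Bool.bool_dec (Nat.odd i) d) as [E|E].
    + destruct (IH (S i)) as [z Hz]. exists (true :: z). simpl. rewrite E, Hz; auto.
    + destruct (IH (S (S i))) as [z Hz]. exists (false :: true :: z). simpl.
      rewrite Hz. f_equal. rewrite Nat.odd_succ, <- Nat.negb_odd.
      destruct (Nat.odd i), d; simpl in *; congruence.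
Qed.

Lemma approx L : forall z, 0 <= z <= 1 ->
  exists v, length v = L /\ list_val v <= z <= list_val v + / 2 ^ L.
Proof.
  induction L; intros z Hz.
  - exists nil. simpl. split; [reflexivity|rewrite Rinv_1; lra].
  - destruct (Rle_dec z (1/2)).
    + destruct (IHL (2 * z)) as [v [Hl Hv]]; [lra|].
      exists (false :: v). simpl. rewrite Hl. rewrite Rinv_mult. simpl bit. split; [reflexivity|lra].
    + destruct (IHL (2 * z - 1)) as [v [Hl Hv]]; [lra|].
      exists (true :: v). simpl. rewrite Hl. rewrite Rinv_mult. simpl bit. split; [reflexivity|lra].
Qed.

Lemma val_falses K : list_val (repeat false K) = 0.
Proof. induction K; simpl; auto. rewrite IHK. simpl. lra. Qed.

Lemma rho_falses i K : rho_from i (repeat false K) = nil.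
Proof. revert i; induction K; intros i; simpl; auto. Qed.

Definition sw (W : list bool) : nat -> bool := fun i => nth i W true.

Lemma sw_val W : stream_val (sw W) = list_val W + / 2 ^ length W.
Proof.
  rewrite (sv_split _ (length W)). rewrite is_prefix_eq.
  - rewrite (sv_ext _ (fun _ => true)), sv_ones. unfold Rdiv; ring.
    intros i. unfold shiftn, sw. apply nth_overflow. lia.
  - intros i Hi. unfold sw. apply nth_indep; auto.
Qed.

Lemma inv_pow_pos n : 0 < / 2 ^ n.
Proof. apply Rinv_0_lt_compat, rpow2_pos. Qed.

Lemma inv_pow_le1 n : / 2 ^ n <= 1.
Proof. rewrite <- Rinv_1. apply Rinv_le_contravar. lra. apply pow_R1_Rle. lra. Qed.

Lemma inv_pow_add m n : / 2 ^ (m + n) = / 2 ^ m * / 2 ^ n.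
Proof. rewrite pow_add, Rinv_mult. auto. Qed.

Lemma hit w y eps d : Ix w y -> 0 < eps -> 0 < d ->
  exists t, list_val w < t < list_val w + d /\ Rabs (Rmap t - y) < eps.
Proof.
  intros Hy He Hd. unfold Ix in Hy.
  set (u := rho w) in *. set (L0 := length u) in *.
  destruct (small_pow _ He) as [L HL].
  assert (HE0 := inv_pow_pos L0). assert (H20 := rpow2_pos L0).
  set (y' := (y - list_val u) * 2 ^ L0).
  assert (Hyy : y = list_val u + y' * / 2 ^ L0).
  { unfold y'. field. apply pow_nonzero; lra. }
  assert (Hy' : 0 <= y' <= 1).
  { unfold y'. split. apply Rmult_le_pos; lra.
    replace 1 with (/ 2 ^ L0 * 2 ^ L0) by (field; apply pow_nonzero; lra).
    apply Rmult_le_compat_r; lra. }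
  destruct (approx L y' Hy') as [v [Hlv Hv]].
  destruct (small_pow _ Hd) as [K HK].
  destruct (realize v (length w + K)) as [z Hz].
  set (W := w ++ repeat false K ++ z).
  exists (list_val W + / 2 ^ length W).
  assert (HW : list_val W = list_val w + (list_val z * / 2 ^ K) * / 2 ^ length w).
  { unfold W. rewrite list_val_app, list_val_app, val_falses, repeat_length. unfold Rdiv. ring. }
  assert (HlW : length W = (length w + K + length z)%nat).
  { unfold W. rewrite !length_app, repeat_length. lia. }
  assert (HrW : rho W = u ++ v).
  { unfold W, rho, u, rho. rewrite rho_from_app, rho_from_app, rho_falses, repeat_length.
    simpl. rewrite Hz. auto. }
  assert (Hz1 := list_val_bounds z).
  assert (HA := inv_pow_pos (length w)). assert (HB := inv_pow_pos K).
  assert (HC := inv_pow_pos (length z)).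
  assert (HA1 := inv_pow_le1 (length w)).
  split.
  - rewrite HW, HlW, !inv_pow_add.
    set (A := / 2 ^ length w) in *. set (B := / 2 ^ K) in *. set (C := / 2 ^ length z) in *.
    assert (0 <= list_val z * B * A) by (apply Rmult_le_pos; [apply Rmult_le_pos|]; lra).
    assert (0 < A * B * C) by (apply Rmult_lt_0_compat; [apply Rmult_lt_0_compat|]; lra).
    split. lra.
    assert (list_val z * B * A + A * B * C = (list_val z + C) * (A * B)) by ring.
    assert ((list_val z + C) * (A * B) <= 1 * (A * B)).
    { apply Rmult_le_compat_r. apply Rmult_le_pos; lra. lra. }
    assert (A * B <= 1 * B) by (apply Rmult_le_compat_r; lra).
    lra.
  - assert (Hn := nbhd W (list_val W + / 2 ^ length W)).
    assert (HWW := inv_pow_pos (length W)).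
    destruct Hn as [Hn1 Hn2]. lra.
    rewrite HrW, list_val_app, length_app in *. fold L0 in Hn1, Hn2.
    rewrite Hlv, inv_pow_add in Hn2.
    set (F := / 2 ^ L) in *. set (E0 := / 2 ^ L0) in *.
    set (R0 := Rmap _) in *. unfold Rdiv in Hn1, Hn2. fold E0 in Hn1, Hn2.
    assert (HF := inv_pow_pos L). fold F in HF.
    assert (HE1 := inv_pow_le1 L0). fold E0 in HE1.
    assert (y' * E0 - list_val v * E0 <= F * E0).
    { replace (y' * E0 - list_val v * E0) with ((y' - list_val v) * E0) by ring.
      apply Rmult_le_compat_r; lra. }
    assert (0 <= y' * E0 - list_val v * E0).
    { replace (y' * E0 - list_val v * E0) with ((y' - list_val v) * E0) by ring.
      apply Rmult_le_pos; lra. }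
    assert (E0 * F <= 1 * F) by (apply Rmult_le_compat_r; lra).
    rewrite Hyy. apply Rabs_def1; lra.
Qed.

Lemma right_dyadic w t : list_val w < t <= list_val w + / 2 ^ length w -> Ix w (Rmap t).
Proof. intros H. unfold Ix. apply nbhd; auto. Qed.

Lemma dyadic_succ p : list_val p + / 2 ^ length p < 1 ->
  exists q, list_val q = list_val p + / 2 ^ length p.
Proof.
  induction p as [|c p IH]; intros H.
  - simpl in H. rewrite Rinv_1 in H. lra.
  - simpl in H |- *. rewrite Rinv_mult in *.
    assert (Hb := list_val_bounds p).
    destruct (Rlt_dec (list_val p + / 2 ^ length p) 1) as [Hl|Hl].
    + destruct (IH Hl) as [q Hq]. exists (c :: q). simpl. rewrite Hq. lra.
    + assert (E : list_val p + / 2 ^ length p = 1) by lra.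
      destruct c; simpl bit in *. lra.
      exists (true :: nil). simpl. lra.
Qed.

Lemma ell_large a d : 0 < a <= 1 -> 0 < d ->
  exists m, / 2 ^ length (rho (prefix (beta a) m)) < d.
Proof.
  intros Ha Hd. destruct (beta_spec a Ha) as [Hi _].
  destruct (small_pow _ Hd) as [N HN].
  destruct (rho_len_unbounded _ Hi N) as [m Hm]. exists m.
  assert (H := inv_pow_le N (length (rho (prefix (beta a) m))) ltac:(lia)). lra.
Qed.

Lemma cyl_close a t m : 0 < a <= 1 ->
  list_val (prefix (beta a) m) < t <= list_val (prefix (beta a) m) + / 2 ^ m ->
  Rabs (Rmap t - Rmap a) <= / 2 ^ length (rho (prefix (beta a) m)).
Proof.
  intros Ha Ht.
  assert (H1 := Rmap_cyl a m Ha).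
  assert (H2 := nbhd (prefix (beta a) m) t). rewrite prefix_length in H2.
  specialize (H2 Ht). apply Rabs_le. lra.
Qed.

Lemma left_close a d : 0 < a <= 1 -> 0 < d ->
  exists eta, 0 < eta /\ forall t, a - eta < t <= a -> Rabs (Rmap t - Rmap a) < d.
Proof.
  intros Ha Hd. destruct (ell_large a d Ha Hd) as [m Hm].
  destruct (beta_spec a Ha) as [Hi Hv].
  assert (Hp := prefix_interval _ m Hi). rewrite Hv in Hp.
  exists (a - list_val (prefix (beta a) m)). split. lra.
  intros t Ht. assert (H := cyl_close a t m Ha ltac:(lra)). lra.
Qed.

Lemma right_close a d : 0 < a < 1 -> ~ (exists w, a = list_val w) -> 0 < d ->
  exists eta, 0 < eta /\ forall t, a <= t < a + eta -> Rabs (Rmap t - Rmap a) < d.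
Proof.
  intros Ha Hnd Hd. destruct (ell_large a d ltac:(lra) Hd) as [m Hm].
  destruct (beta_spec a ltac:(lra)) as [Hi Hv].
  assert (Hp := prefix_interval _ m Hi). rewrite Hv in Hp.
  set (p := prefix (beta a) m) in *.
  assert (Hlt : a < list_val p + / 2 ^ m).
  { destruct (Rlt_dec a (list_val p + / 2 ^ m)); auto. exfalso.
    assert (E : a = list_val p + / 2 ^ m) by lra.
    destruct (dyadic_succ p) as [q Hq].
    - unfold p; rewrite prefix_length. fold p. lra.
    - apply Hnd. exists q. rewrite Hq. unfold p; rewrite prefix_length. fold p. auto. }
  exists (list_val p + / 2 ^ m - a). split. lra.
  intros t Ht. assert (Hq : list_val p < t <= list_val p + / 2 ^ m) by lra.
  assert (H := cyl_close a t m ltac:(lra) Hq). fold p in H. lra.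
Qed.

Lemma decomp w : list_val w <> 0 -> exists w' j, w = w' ++ true :: repeat false j.
Proof.
  induction w as [|a w IH] using rev_ind; intros H.
  - simpl in H. lra.
  - destruct a.
    + exists w, 0%nat. auto.
    + rewrite list_val_app in H. simpl in H.
      destruct IH as [w' [j E]]. { intros H0. apply H. rewrite H0. field. apply pow_nonzero; lra. }
      exists w', (S j). rewrite E, <- app_assoc. simpl. f_equal. f_equal.
      clear. induction j; simpl; auto. rewrite IHj. auto.
Qed.

Lemma odd_S n : Nat.odd (S n) = negb (Nat.odd n).
Proof. rewrite Nat.odd_succ, <- Nat.negb_odd. auto. Qed.

Lemma notin w : list_val w <> 0 -> ~ Ix w (Rmap (list_val w)).
Proof.
  intros H. destruct (decomp w H) as [w' [j E]]. subst w.
  set (k := length w').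
  assert (Hv : list_val (w' ++ true :: repeat false j) = list_val w' + / 2 ^ k / 2).
  { rewrite list_val_app. simpl. rewrite val_falses. fold k. simpl. field. apply pow_nonzero; lra. }
  assert (Hr : rho (w' ++ true :: repeat false j) = rho w' ++ Nat.odd k :: nil).
  { unfold rho. rewrite rho_from_app. simpl. rewrite rho_falses. auto. }
  set (p := w' ++ false :: true :: true :: true :: nil).
  assert (Hp : list_val p = list_val w' + / 2 ^ k * (7/16)).
  { unfold p. rewrite list_val_app. simpl. fold k. field. apply pow_nonzero; lra. }
  assert (Hlp : / 2 ^ length p = / 2 ^ k / 16).
  { unfold p. rewrite length_app, inv_pow_add. simpl. fold k. field. apply pow_nonzero; lra. }
  assert (HE := inv_pow_pos k).
  assert (Hn := nbhd p (list_val (w' ++ true :: repeat false j))).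
  rewrite Hv, Hp, Hlp in Hn. specialize (Hn ltac:(lra)).
  assert (Hrp : rho p = rho w' ++ Nat.odd (S k) :: Nat.odd (S (S k)) :: Nat.odd (S (S (S k))) :: nil).
  { unfold p, rho. rewrite rho_from_app. simpl. fold k. auto. }
  rewrite Hrp, !odd_S in Hn. unfold Ix. rewrite Hr, Hv.
  rewrite !list_val_app, !length_app in *. simpl length in *.
  rewrite !inv_pow_add in *.
  set (L := length (rho w')) in *. assert (HL := inv_pow_pos L).
  set (V := list_val (rho w')) in *.
  set (Rx := Rmap _) in *.
  destruct (Nat.odd k); simpl in *; unfold Rdiv in *; rewrite ?Rinv_1 in *; rewrite ?Rmult_1_r in *; intros [? ?]; lra.
Qed.

Definition Tset (x d : R) : R -> Prop := fun y => exists t, x < t < x + d /\ y = Rmap t.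

Lemma Ix_lo w : Ix w (list_val (rho w)).
Proof. unfold Ix. assert (H := inv_pow_pos (length (rho w))). lra. Qed.
Lemma Ix_hi w : Ix w (list_val (rho w) + / 2 ^ length (rho w)).
Proof. unfold Ix. assert (H := inv_pow_pos (length (rho w))). lra. Qed.

Lemma approach_lo w d b : 0 < d -> is_lb_Rbar (Tset (list_val w) d) b ->
  Rbar_le b (Finite (list_val (rho w))).
Proof.
  intros Hd Hb. destruct b as [r| |]; simpl; auto.
  - destruct (Rle_dec r (list_val (rho w))) as [|Hn]; auto. exfalso.
    destruct (hit w _ (r - list_val (rho w)) d (Ix_lo w)) as [t [Ht Hr]]; try lra.
    specialize (Hb (Rmap t) (ex_intro _ t (conj Ht eq_refl))). simpl in Hb.
    apply Rabs_def2 in Hr. lra.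
  - destruct (hit w _ 1 d (Ix_lo w)) as [t [Ht Hr]]; try lra.
    exact (Hb (Rmap t) (ex_intro _ t (conj Ht eq_refl))).
Qed.

Lemma approach_hi w d b : 0 < d -> is_ub_Rbar (Tset (list_val w) d) b ->
  Rbar_le (Finite (list_val (rho w) + / 2 ^ length (rho w))) b.
Proof.
  intros Hd Hb. destruct b as [r| |]; simpl; auto.
  - destruct (Rle_dec (list_val (rho w) + / 2 ^ length (rho w)) r) as [|Hn]; auto. exfalso.
    destruct (hit w _ (list_val (rho w) + / 2 ^ length (rho w) - r) d (Ix_hi w)) as [t [Ht Hr]]; try lra.
    specialize (Hb (Rmap t) (ex_intro _ t (conj Ht eq_refl))). simpl in Hb.
    apply Rabs_def2 in Hr. lra.
  - destruct (hit w _ 1 d (Ix_hi w)) as [t [Ht Hr]]; try lra.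
    exact (Hb (Rmap t) (ex_intro _ t (conj Ht eq_refl))).
Qed.

Lemma inside w t : list_val w < t < list_val w + / 2 ^ length w -> Ix w (Rmap t).
Proof. intros H. apply right_dyadic. lra. Qed.

Lemma liminf_eq w : liminf_right Rmap (list_val w) = Finite (list_val (rho w)).
Proof.
  unfold liminf_right. apply is_lub_Rbar_unique. split.
  - intros s [d [Hd Hs]]. fold (Tset (list_val w) d) in Hs.
    change (Rbar_le (Finite s) (Finite (list_val (rho w)))). rewrite Hs.
    apply (approach_lo w d); auto. apply Glb_Rbar_correct.
  - intros b Hb. apply Hb. exists (/ 2 ^ length w). split. apply inv_pow_pos.
    symmetry. apply is_glb_Rbar_unique. split.
    + intros y [t [Ht Hy]]. subst y. simpl. apply inside; auto.
    + intros c Hc. apply (approach_lo w (/ 2 ^ length w)); auto. apply inv_pow_pos.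
Qed.

Lemma limsup_eq w : limsup_right Rmap (list_val w) =
  Finite (list_val (rho w) + / 2 ^ length (rho w)).
Proof.
  unfold limsup_right. apply is_glb_Rbar_unique. split.
  - intros s [d [Hd Hs]]. fold (Tset (list_val w) d) in Hs.
    change (Rbar_le (Finite (list_val (rho w) + / 2 ^ length (rho w))) (Finite s)). rewrite Hs.
    apply (approach_hi w d); auto. apply Lub_Rbar_correct.
  - intros b Hb. apply Hb. exists (/ 2 ^ length w). split. apply inv_pow_pos.
    symmetry. apply is_lub_Rbar_unique. split.
    + intros y [t [Ht Hy]]. subst y. simpl. apply inside; auto.
    + intros c Hc. apply (approach_hi w (/ 2 ^ length w)); auto. apply inv_pow_pos.
Qed.

Lemma sqrt_upper u v : sqrt (u ^ 2 + v ^ 2) <= Rabs u + Rabs v.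
Proof.
  assert (H0 : 0 <= Rabs u + Rabs v) by (assert (H1 := Rabs_pos u); assert (H2 := Rabs_pos v); lra).
  rewrite <- (sqrt_pow2 (Rabs u + Rabs v)) by auto.
  apply sqrt_le_1_alt. rewrite <- (pow2_abs u), <- (pow2_abs v).
  assert (H1 := Rabs_pos u); assert (H2 := Rabs_pos v). nra.
Qed.

Lemma sqrt_lower1 u v : Rabs u <= sqrt (u ^ 2 + v ^ 2).
Proof.
  rewrite <- (sqrt_pow2 (Rabs u)) by apply Rabs_pos.
  apply sqrt_le_1_alt. rewrite pow2_abs. assert (0 <= v ^ 2) by (apply pow2_ge_0). lra.
Qed.

Lemma sqrt_lower2 u v : Rabs v <= sqrt (u ^ 2 + v ^ 2).
Proof. rewrite Rplus_comm. apply sqrt_lower1. Qed.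

Lemma closure_iff a b :
  in_closure_graph Rmap a b <->
       ((0 <= a <= 1 /\ b = Rmap a) \/
        (exists w : list bool, a = list_val w /\ Ix w b)).
Proof.
  split.
  - intros Hcl.
    assert (Hc : forall e, 0 < e -> exists t, 0 <= t <= 1 /\ Rabs (t - a) < e /\ Rabs (Rmap t - b) < e).
    { intros e He. destruct (Hcl e He) as [t [Ht Hs]]. exists t. split; auto.
      assert (H1 := sqrt_lower1 (t - a) (Rmap t - b)). assert (H2 := sqrt_lower2 (t - a) (Rmap t - b)).
      lra. }
    assert (Ha : 0 <= a <= 1).
    { split.
      - destruct (Rle_dec 0 a); auto. destruct (Hc (- a)) as [t [Ht [H1 _]]]. lra.
        apply Rabs_def2 in H1. lra.
      - destruct (Rle_dec a 1); auto. destruct (Hc (a - 1)) as [t [Ht [H1 _]]]. lra.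
        apply Rabs_def2 in H1. lra. }
    assert (Hb : 0 <= b <= 1).
    { split.
      - destruct (Rle_dec 0 b); auto. destruct (Hc (- b)) as [t [Ht [_ H1]]]. lra.
        apply Rabs_def2 in H1. assert (H3 := Rmap_bounds t). lra.
      - destruct (Rle_dec b 1); auto. destruct (Hc (b - 1)) as [t [Ht [_ H1]]]. lra.
        apply Rabs_def2 in H1. assert (H3 := Rmap_bounds t). lra. }
    destruct (Req_dec a 0) as [Ha0|Ha0].
    { right. exists nil. split. simpl; auto. unfold Ix. simpl. rewrite Rinv_1. lra. }
    destruct (classic (b = Rmap a)) as [Hba|Hba]. { left; auto. }
    assert (Hd : 0 < Rabs (b - Rmap a)) by (apply Rabs_pos_lt; lra).
    set (dl := Rabs (b - Rmap a)) in *.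
    destruct (left_close a (dl / 2) ltac:(lra) ltac:(lra)) as [e1 [He1 Hl]].
    destruct (classic (exists w, a = list_val w)) as [[w Hw]|Hnd].
    + right. exists w. split; auto. apply NNPP. intros HnI. unfold Ix in HnI.
      set (lo := list_val (rho w)) in *. set (hi := lo + / 2 ^ length (rho w)) in *.
      assert (Hlh : lo <= hi) by (unfold hi; assert (H := inv_pow_pos (length (rho w))); lra).
      destruct (Rle_dec lo b) as [Hlb|Hlb].
      * assert (Hhb : hi < b) by lra.
        destruct (Hc (Rmin (Rmin (dl / 2) e1) (Rmin (b - hi) (/ 2 ^ length w)))) as [t [Ht [H1 H2]]].
        { assert (H := inv_pow_pos (length w)). repeat apply Rmin_pos; lra. }
        assert (Hm1 := Rmin_l (Rmin (dl / 2) e1) (Rmin (b - hi) (/ 2 ^ length w))).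
        assert (Hm2 := Rmin_r (Rmin (dl / 2) e1) (Rmin (b - hi) (/ 2 ^ length w))).
        assert (Hm3 := Rmin_l (dl / 2) e1). assert (Hm4 := Rmin_r (dl / 2) e1).
        assert (Hm5 := Rmin_l (b - hi) (/ 2 ^ length w)). assert (Hm6 := Rmin_r (b - hi) (/ 2 ^ length w)).
        apply Rabs_def2 in H1. apply Rabs_def2 in H2.
        destruct (Rle_dec t a).
        -- assert (Hq := Hl t ltac:(lra)).
           assert (Hq2 := Rabs_triang (b - Rmap t) (Rmap t - Rmap a)).
           replace (b - Rmap t + (Rmap t - Rmap a)) with (b - Rmap a) in Hq2 by ring.
           assert (Hq3 : Rabs (b - Rmap t) < dl / 2) by (apply Rabs_def1; lra).
           fold dl in Hq2. lra.
        -- assert (Hi := inside w t ltac:(lra)). unfold Ix in Hi. fold lo in Hi. fold hi in Hi. lra.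
      * destruct (Hc (Rmin (Rmin (dl / 2) e1) (Rmin (lo - b) (/ 2 ^ length w)))) as [t [Ht [H1 H2]]].
        { assert (H := inv_pow_pos (length w)). repeat apply Rmin_pos; lra. }
        assert (Hm1 := Rmin_l (Rmin (dl / 2) e1) (Rmin (lo - b) (/ 2 ^ length w))).
        assert (Hm2 := Rmin_r (Rmin (dl / 2) e1) (Rmin (lo - b) (/ 2 ^ length w))).
        assert (Hm3 := Rmin_l (dl / 2) e1). assert (Hm4 := Rmin_r (dl / 2) e1).
        assert (Hm5 := Rmin_l (lo - b) (/ 2 ^ length w)). assert (Hm6 := Rmin_r (lo - b) (/ 2 ^ length w)).
        apply Rabs_def2 in H1. apply Rabs_def2 in H2.
        destruct (Rle_dec t a).
        -- assert (Hq := Hl t ltac:(lra)).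
           assert (Hq2 := Rabs_triang (b - Rmap t) (Rmap t - Rmap a)).
           replace (b - Rmap t + (Rmap t - Rmap a)) with (b - Rmap a) in Hq2 by ring.
           assert (Hq3 : Rabs (b - Rmap t) < dl / 2) by (apply Rabs_def1; lra).
           fold dl in Hq2. lra.
        -- assert (Hi := inside w t ltac:(lra)). unfold Ix in Hi. fold lo in Hi. lra.
    + exfalso.
      assert (He2 : exists e2, 0 < e2 /\ forall t, a <= t < a + e2 -> t <= 1 -> Rabs (Rmap t - Rmap a) < dl / 2).
      { destruct (Req_dec a 1) as [Ha1|Ha1].
        - exists 1. split. lra. intros t Ht Ht1. replace t with a by lra.
          replace (Rmap a - Rmap a) with 0 by ring. rewrite Rabs_R0. lra.
        - destruct (right_close a (dl / 2) ltac:(lra) Hnd ltac:(lra)) as [e2 [He2 Hr]].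
          exists e2. split; auto. }
      destruct He2 as [e2 [He2 Hr]].
      destruct (Hc (Rmin (dl / 2) (Rmin e1 e2))) as [t [Ht [H1 H2]]].
      { repeat apply Rmin_pos; lra. }
      assert (Hm1 := Rmin_l (dl / 2) (Rmin e1 e2)). assert (Hm2 := Rmin_r (dl / 2) (Rmin e1 e2)).
      assert (Hm3 := Rmin_l e1 e2). assert (Hm4 := Rmin_r e1 e2).
      apply Rabs_def2 in H1. apply Rabs_def2 in H2.
      assert (Hq : Rabs (Rmap t - Rmap a) < dl / 2).
      { destruct (Rle_dec t a). apply Hl; lra. apply Hr; lra. }
      assert (Hq2 := Rabs_triang (b - Rmap t) (Rmap t - Rmap a)).
      replace (b - Rmap t + (Rmap t - Rmap a)) with (b - Rmap a) in Hq2 by ring.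
      assert (Hq3 : Rabs (b - Rmap t) < dl / 2) by (apply Rabs_def1; lra).
      fold dl in Hq2. lra.
  - intros [[Ha Hb]|[w [Hw HI]]] eps He.
    + exists a. split; auto. rewrite Hb. replace (a - a) with 0 by ring.
      replace (Rmap a - Rmap a) with 0 by ring. simpl. rewrite Rmult_0_l, Rplus_0_l. rewrite sqrt_0. auto.
    + assert (HA := inv_pow_pos (length w)).
      destruct (hit w b (eps / 2) (Rmin (eps / 2) (/ 2 ^ length w)) HI) as [t [Ht Hr]]. lra.
      apply Rmin_pos; lra.
      assert (Hm1 := Rmin_l (eps / 2) (/ 2 ^ length w)). assert (Hm2 := Rmin_r (eps / 2) (/ 2 ^ length w)).
      assert (Hwb := list_val_bounds w).
      exists t. split. lra.
      assert (Hs := sqrt_upper (t - a) (Rmap t - b)).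
      assert (Rabs (t - a) < eps / 2) by (apply Rabs_def1; lra). lra.
Qed.

Theorem proposition4p1 :
  (forall a b : R,
     in_closure_graph Rmap a b <->
       ((0 <= a <= 1 /\ b = Rmap a) \/
        (exists w : list bool, a = list_val w /\ Ix w b)))
  /\
  (forall w : list bool, list_val w <> 0 ->
     (forall y : R,
        Ix w y <->
          (Rbar_le (liminf_right Rmap (list_val w)) (Finite y) /\
           Rbar_le (Finite y) (limsup_right Rmap (list_val w))))
     /\ ~ Ix w (Rmap (list_val w))).
Proof.
  split.
  - apply closure_iff.
  - intros w Hw. split.
    + intros y. rewrite liminf_eq, limsup_eq. unfold Ix. simpl. tauto.
    + apply notin; auto.
Qed.
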